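(* In the personalized Bayesian linear regression model with DP described in the context, suppose $\mathbf{X}_n^{\intercal}\mathbf{X}_n=\rho\mathbf{I}_d$ for all $n$, with $\rho>0$. Then the DP-perturbed optimal personalized model is $$\tilde{\boldsymbol{\varpi}}_n^{\ast}(\lambda)=\frac{b}{(2-\lambda)\rho+b\lambda}\Big(\Big(\frac{(2-\lambda)\rho}{b}+\frac{\lambda}{N}\Big)\hat{\boldsymbol{u}}_n+\frac{\lambda}{N}\sum_{m\ne n}\hat{\boldsymbol{u}}_m+\frac{\lambda}{N}\sum_{m=1}^N\mathbf{z}_m\Big),$$ and, conditionally on the estimates $\hat{\boldsymbol{u}}_1,\dots,\hat{\boldsymbol{u}}_N$, the optimal local model satisfies $$\boldsymbol{u}_n^{\ast}=\frac{\sigma_w^2\rho}{\sigma^2}\hat{\boldsymbol{u}}_n+\frac{\sigma_w^2\rho}{\sigma^2+N\zeta^2\rho}\sum_{m\ne n}\hat{\boldsymbol{u}}_m+\boldsymbol{\vartheta}_n,$$ where $\boldsymbol{\vartheta}_n\sim\mathcal{N}(0,\sigma_w^2\mathbf{I}_d)$ and $\sigma_w^2=\Big(\frac{N-1}{\sigma^2/\rho+N\zeta^2}+\frac{\rho}{\sigma^2}\Big)^{-1}$.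
   Context: Model: $N$ clients, each with $b$ samples $\mathbf{X}_n\in\mathbb{R}^{b\times d}$, $\mathbf{Y}_n\in\mathbb{R}^b$. The optimal global model $\boldsymbol{\omega}^{\ast}$ has the non-informative (uniform) prior on $\mathbb{R}^d$; $\boldsymbol{u}_n^{\ast}=\boldsymbol{\omega}^{\ast}+\boldsymbol{\tau}_n$ with $\boldsymbol{\tau}_n\sim\mathcal{N}(0,\zeta^2\mathbf{I}_d)$ i.i.d.; $\mathbf{Y}_n=\mathbf{X}_n\boldsymbol{u}_n^{\ast}+\boldsymbol{\nu}_n$ with $\boldsymbol{\nu}_n\sim\mathcal{N}(0,\sigma^2\mathbf{I}_b)$. Local loss $F_n(\boldsymbol{u})=\frac1b\|\mathbf{X}_n\boldsymbol{u}-\mathbf{Y}_n\|^2$; local estimate $\hat{\boldsymbol{u}}_n=(\mathbf{X}_n^{\intercal}\mathbf{X}_n)^{-1}\mathbf{X}_n^{\intercal}\mathbf{Y}_n$. With DP, the server receives $\tilde{\boldsymbol{u}}_n=\hat{\boldsymbol{u}}_n+\mathbf{z}_n$, $\mathbf{z}_n\sim\mathcal{N}(0,\sigma_u^2\mathbf{I}_d)$ i.i.d., and forms $\tilde{\boldsymbol{\omega}}^{\ast}=\sum_{n=1}^N(\mathbf{X}^{\intercal}\mathbf{X})^{-1}\mathbf{X}_n^{\intercal}\mathbf{X}_n\tilde{\boldsymbol{u}}_n$, where $\mathbf{X}=(\mathbf{X}_1^{\top}\cdots\mathbf{X}_N^{\top})^{\top}$. For $\lambda\in[0,2]$, $\tilde{\boldsymbol{\varpi}}_n^{\ast}(\lambda)=\arg\min_{\boldsymbol{\varpi}}\big[(1-\frac{\lambda}{2})F_n(\boldsymbol{\varpi})+\frac{\lambda}{2}\|\boldsymbol{\varpi}-\tilde{\boldsymbol{\omega}}^{\ast}\|^2\big]$.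 *)

(* Defs.v *)
From HB Require Import structures.
From mathcomp Require Import all_boot all_order all_algebra.
From mathcomp Require Import all_classical all_reals all_analysis.
Set Implicit Arguments. Unset Strict Implicit. Unset Printing Implicit Defensive.
Import Order.TTheory GRing.Theory Num.Theory.
Local Open Scope ring_scope.

Section Defs.
Variable R : realType.

Definition sqnorm k (v : 'cV[R]_k) : R := \sum_(i < k) (v i ord0) ^+ 2.

Definition gauss k (m : 'cV[R]_k) (s2 : R) (x : 'cV[R]_k) : R :=
  (Num.sqrt (2 * pi * s2)) ^- k * expR (- sqnorm (x - m) / (2 * s2)).

Definition is_unique_argmin (T : Type) (f : T -> R) (x : T) : Prop :=
  (forall y, f x <= f y) /\ (forall y, (forall y', f y <= f y') -> y = x).

(* Lebesgue integral over R^k of a nonnegative function, as k iterated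
   one-dimensional Lebesgue integrals (Tonelli) *)
Definition ncons (x : R) (v : nat -> R) : nat -> R :=
  fun i => if i is i'.+1 then v i' else x.

Fixpoint intRn (k : nat) (f : (nat -> R) -> \bar R) : \bar R :=
  match k with
  | 0 => f (fun _ => 0)
  | k'.+1 => (\int[lebesgue_measure]_(x in setT) intRn k' (fun v => f (ncons x v)))%E
  end.

Definition intV k (F : 'cV[R]_k -> \bar R) : \bar R :=
  intRn k (fun v => F (\col_(i < k) v i)).

(* integrate, over R^d, the coordinates m in s of a family g of vectors *)
Fixpoint intFam N d (s : seq 'I_N) (F : ('I_N -> 'cV[R]_d) -> \bar R)
    (g : 'I_N -> 'cV[R]_d) : \bar R :=
  match s with
  | [::] => F g
  | m :: s' => intV (fun x => intFam s' F (fun j => if j == m then x else g j))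
  end.

Definition uhat b d (Xn : 'M[R]_(b, d)) (Yn : 'cV[R]_b) : 'cV[R]_d :=
  invmx (Xn^T *m Xn) *m Xn^T *m Yn.

Definition Floss b d (Xn : 'M[R]_(b, d)) (Yn : 'cV[R]_b) (u : 'cV[R]_d) : R :=
  b%:R^-1 * sqnorm (Xn *m u - Yn).

Definition Xstack N b d (X : 'I_N -> 'M[R]_(b, d)) :=
  \mxcol_(m < N) (X m : 'M[R]_((fun _ : 'I_N => b) m, d)).

Definition omega_tilde N b d (X : 'I_N -> 'M[R]_(b, d)) (Y : 'I_N -> 'cV[R]_b)
    (z : 'I_N -> 'cV[R]_d) : 'cV[R]_d :=
  \sum_(m < N) (invmx ((Xstack X)^T *m Xstack X) *m ((X m)^T *m X m)
                *m (uhat (X m) (Y m) + z m)).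

Definition pers_obj N b d (X : 'I_N -> 'M[R]_(b, d)) (Y : 'I_N -> 'cV[R]_b)
    (z : 'I_N -> 'cV[R]_d) (n : 'I_N) (lambda : R) (w : 'cV[R]_d) : R :=
  (1 - lambda / 2) * Floss (X n) (Y n) w
  + lambda / 2 * sqnorm (w - omega_tilde X Y z).

(* joint (unnormalised, flat prior on omega) density of
   (omega, u_1..u_N, Y_1..Y_N):  prod_m N(Y_m; X_m u_m, s^2 I_b) N(u_m; omega, zeta^2 I_d) *)
Definition joint_density N b d (X : 'I_N -> 'M[R]_(b, d)) (Y : 'I_N -> 'cV[R]_b)
    (sigma zeta : R) (omega : 'cV[R]_d) (u : 'I_N -> 'cV[R]_d) : R :=
  \prod_(m < N) (gauss (X m *m u m) (sigma ^+ 2) (Y m) * gauss omega (zeta ^+ 2) (u m)).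

(* unnormalised posterior density of u_n given the data: the joint density
   integrated over omega and over all u_m, m <> n, with u_n = u *)
Definition post_unnorm N b d (X : 'I_N -> 'M[R]_(b, d)) (Y : 'I_N -> 'cV[R]_b)
    (sigma zeta : R) (n : 'I_N) (u : 'cV[R]_d) : \bar R :=
  intV (fun omega =>
    intFam [seq m <- enum 'I_N | m != n]
      (fun g => (joint_density X Y sigma zeta omega g)%:E)
      (fun _ => u)).

End Defs.

(* Main.v *)
Set Warnings "-all".
Require Import Defs.
From HB Require Import structures.
From mathcomp Require Import all_boot all_order all_algebra.
From mathcomp Require Import all_classical all_reals all_analysis.
From mathcomp Require Import ring lra.
Import Order.TTheory GRing.Theory Num.Theory.
Local Open Scope ring_scope.

Lemma scal (R : realFieldType) (r s z M : R) : 0 < r -> 0 < s -> 0 < z -> 0 <= M ->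
  let al := (2 * s)^-1 * r in let be := (2 * z)^-1 in
  let ga := al * be / (al + be) in let ga' := ga * M in
  let dl := be * ga' / (be + ga') in
  let sw2 := ((M + 1 - 1) / (s / r + (M + 1) * z) + r / s)^-1 in
  [/\ al + dl = (2 * sw2)^-1,
      (al + dl)^-1 * al = sw2 * r / s &
      (al + dl)^-1 * (be * ga / (be + ga')) = sw2 * r / (s + (M + 1) * z * r)].
Proof.
move=> r0 s0 z0 M0 al be ga ga' dl sw2.
have rz : 0 < r * z by rewrite mulr_gt0.
have rzM : 0 <= r * M * z by rewrite mulr_ge0 ?mulr_ge0 // ltW.
have sMrz : 0 < s + (M + 1) * z * r by nra.
have sMrz' : 0 < s * M + s + r * M * z + r * z by nra.
have rs : 0 < r * s by rewrite mulr_gt0.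
have rMs : 0 <= r * M * s by rewrite mulr_ge0 ?mulr_ge0 // ltW.
have rrz : 0 < r * (r * z) by rewrite mulr_gt0.
have rrMz : 0 <= r * (r * M * z) by rewrite mulr_ge0 // ltW.
rewrite /sw2 /dl /ga' /ga /be /al; split.
- field; repeat (apply/andP; split); apply/lt0r_neq0; nra.
- field; repeat (apply/andP; split); apply/lt0r_neq0; nra.
- field; repeat (apply/andP; split); apply/lt0r_neq0; nra.
Qed.

Section Aux.
Variable R : realType.

Lemma sqnorm_ge0 k (v : 'cV[R]_k) : 0 <= sqnorm v.
Proof. by apply: sumr_ge0 => i _; exact: sqr_ge0. Qed.

Lemma sqnorm_eq0 k (v : 'cV[R]_k) : sqnorm v = 0 -> v = 0.
Proof.
move=> /eqP; rewrite psumr_eq0 => [H|i _]; last exact: sqr_ge0.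
apply/matrixP => i j; rewrite ord1 mxE.
by move/allP: H => /(_ i (mem_index_enum _)) /=; rewrite sqrf_eq0 => /eqP.
Qed.

Lemma sqnormB_sym k (v w : 'cV[R]_k) : sqnorm (v - w) = sqnorm (w - v).
Proof. by apply: eq_bigr => i _; rewrite !mxE -sqrrN opprB. Qed.

Lemma sqnorm_comb k (a c : R) (x p q : 'cV[R]_k) : a + c != 0 ->
  a * sqnorm (x - p) + c * sqnorm (x - q) =
  (a + c) * sqnorm (x - (a + c)^-1 *: (a *: p + c *: q))
  + a * c / (a + c) * sqnorm (p - q).
Proof.
move=> ac; rewrite /sqnorm !mulr_sumr -!big_split /=.
apply: eq_bigr => i _; rewrite !mxE; field; exact: ac.
Qed.


Local Notation mu := (@lebesgue_measure R).

Lemma int_gauss1 (a p c : R) : 0 < a -> 0 <= c ->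
  (\int[mu]_(x in setT) (c * expR (- (a * (x - p) ^+ 2)))%:E)%E
  = (c * Num.sqrt (pi / a))%:E.
Proof.
move=> a0 c0.
set s := Num.sqrt ((2 * a)^-1).
have s0 : 0 < s by rewrite sqrtr_gt0 invr_gt0 mulr_gt0.
have s2 : s ^+ 2 = (2 * a)^-1 by rewrite sqr_sqrtr // invr_ge0 mulr_ge0 // ltW.
have pk : normal_peak s = (Num.sqrt (pi / a))^-1.
  rewrite /normal_peak; congr (_^-1); congr Num.sqrt.
  rewrite s2 -mulr_natr; field; exact: lt0r_neq0.
have pk0 : normal_peak s != 0 by rewrite gt_eqF // normal_peak_gt0 // gt_eqF.
have E x : c * expR (- (a * (x - p) ^+ 2))
    = (c * Num.sqrt (pi / a)) * normal_pdf p s x.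
  rewrite normal_pdfE ?gt_eqF //= pk /normal_fun s2.
  have sq0 : Num.sqrt (pi / a) != 0 by rewrite gt_eqF // sqrtr_gt0 divr_gt0 // pi_gt0.
  have -> : - (x - p) ^+ 2 / ((2 * a)^-1 *+ 2) = - (a * (x - p) ^+ 2).
    rewrite -mulr_natr; field; exact: lt0r_neq0.
  by field.
under eq_integral do rewrite E EFinM.
by rewrite integralZl //= ?integral_normal_pdf ?mule1 //; exact: integrable_normal_pdf.
Qed.

Lemma intRn_gauss k (a : R) (p : nat -> R) c : 0 < a -> 0 <= c ->
  intRn k (fun v => (c * expR (- (a * \sum_(i < k) (v i - p i) ^+ 2)))%:E)
  = (c * Num.sqrt (pi / a) ^+ k)%:E.
Proof.
move=> a0; elim: k p c => [|k IH] p c c0.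
  by rewrite /= big_ord0 mulr0 oppr0 expR0 expr0.
rewrite /=.
transitivity (\int[mu]_(x in setT)
   ((c * Num.sqrt (pi / a) ^+ k) * expR (- (a * (x - p 0%N) ^+ 2)))%:E)%E.
  apply: eq_integral => x _.
  rewrite [X in _ = X](_ : _ = ((c * expR (- (a * (x - p 0%N) ^+ 2)))
                      * Num.sqrt (pi / a) ^+ k)%:E); last by congr EFin; ring.
  rewrite -(IH (fun i => p i.+1)); last by rewrite mulr_ge0 // expR_ge0.
  congr intRn; apply/funext => v; congr EFin.
  rewrite big_ord_recl /= mulrDr opprD expRD mulrA; congr (_ * expR (- (a * _))).
rewrite int_gauss1 //; last by rewrite mulr_ge0 // exprn_ge0 // sqrtr_ge0.
by congr EFin; rewrite exprS; ring.
Qed.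

Lemma intV_gauss k (a : R) (p : 'cV[R]_k) c : 0 < a -> 0 <= c ->
  intV (fun x => (c * expR (- (a * sqnorm (x - p))))%:E)
  = (c * Num.sqrt (pi / a) ^+ k)%:E.
Proof.
move=> a0 c0; rewrite /intV.
pose pn (j : nat) : R := if insub j is Some i then p i ord0 else 0.
rewrite -(intRn_gauss k a pn c a0 c0); congr intRn; apply/funext => v.
congr (EFin (c * expR (- (a * _)))); rewrite /sqnorm; apply: eq_bigr => i _.
by rewrite !mxE /pn valK.
Qed.

Lemma intFam_prod N d (s : seq 'I_N) (phi : 'I_N -> 'cV[R]_d -> R)
    (J : 'I_N -> R) (g : 'I_N -> 'cV[R]_d) :
  uniq s ->
  (forall m x, 0 <= phi m x) -> (forall m, 0 <= J m) ->
  (forall m c, m \in s -> 0 <= c ->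
     intV (fun x => (c * phi m x)%:E) = (c * J m)%:E) ->
  intFam s (fun g => (\prod_m phi m (g m))%:E) g
  = ((\prod_(m | m \notin s) phi m (g m)) * \prod_(m <- s) J m)%:E.
Proof.
move=> + phi0 J0; elim: s g => [|m s IH] g /= Hu Hint.
  by rewrite big_nil mulr1.
have /andP[ms us] := Hu.
set c := \prod_(j | j \notin m :: s) phi j (g j) * \prod_(j <- s) J j.
have c0 : 0 <= c.
  by apply: mulr_ge0; apply: prodr_ge0 => j _; [exact: phi0|exact: J0].
transitivity (intV (fun x => (c * phi m x)%:E)).
  congr intV; apply/funext => x.
  rewrite IH //; last by move=> m' c' m's; apply: Hint; rewrite in_cons m's orbT.
  congr EFin; rewrite (bigD1 m) //= eqxx.
  have -> : \prod_(i < N | (i \notin s) && (i != m)) phi i (if i == m then x else g i)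
      = \prod_(j | j \notin m :: s) phi j (g j).
    apply: eq_big => j; first by rewrite in_cons negb_or andbC.
    by move=> /andP[_ /negbTE ->].
  by rewrite /c; ring.
by rewrite Hint ?mem_head // big_cons /c; congr EFin; ring.
Qed.

Definition dotv {k} (v w : 'cV[R]_k) := \sum_i v i ord0 * w i ord0.

Lemma sqnormE k (v : 'cV[R]_k) : sqnorm v = dotv v v.
Proof. by apply: eq_bigr => i _; rewrite expr2. Qed.

Lemma sqnormB k (v w : 'cV[R]_k) :
  sqnorm (v - w) = sqnorm v - 2 * dotv v w + sqnorm w.
Proof.
rewrite /sqnorm /dotv mulr_sumr -sumrB -big_split /=.
by apply: eq_bigr => i _; rewrite !mxE; ring.
Qed.

Lemma dotvC k (v w : 'cV[R]_k) : dotv v w = dotv w v.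
Proof. by apply: eq_bigr => i _; rewrite mulrC. Qed.

Lemma dotvZr k (v w : 'cV[R]_k) a : dotv v (a *: w) = a * dotv v w.
Proof. by rewrite /dotv mulr_sumr; apply: eq_bigr => i _; rewrite !mxE; ring. Qed.

Lemma dotv_mul m k (A : 'M[R]_(m, k)) u w :
  dotv (A *m u) w = dotv u (A^T *m w).
Proof.
rewrite /dotv; under eq_bigr do rewrite mxE mulr_suml.
rewrite exchange_big /=; apply: eq_bigr => j _.
rewrite mxE mulr_sumr; apply: eq_bigr => i _; rewrite !mxE; ring.
Qed.

Lemma sqnorm_lsq b d (X : 'M[R]_(b, d)) (Y : 'cV[R]_b) (rho : R) (u : 'cV[R]_d) :
  rho != 0 -> X^T *m X = rho%:M ->
  sqnorm (Y - X *m u) = rho * sqnorm (u - uhat X Y)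
                        + (sqnorm Y - rho * sqnorm (uhat X Y)).
Proof.
move=> r0 XX.
have XY : X^T *m Y = rho *: uhat X Y.
  rewrite /uhat XX invmx_scalar -mulmxA mul_scalar_mx scalerA mulfV // scale1r.
  by [].
rewrite !sqnormB (dotvC _ Y) dotv_mul XY dotvZr !sqnormE dotv_mul mulmxA XX.
rewrite mul_scalar_mx dotvZr; ring.
Qed.

Lemma dotv_sumr k (I : finType) (P : pred I) (F : I -> 'cV[R]_k) v :
  dotv v (\sum_(i | P i) F i) = \sum_(i | P i) dotv v (F i).
Proof.
rewrite /dotv; under eq_bigr do rewrite summxE mulr_sumr.
by rewrite exchange_big.
Qed.

Lemma sqnormZ k a (v : 'cV[R]_k) : sqnorm (a *: v) = a ^+ 2 * sqnorm v.
Proof. by rewrite /sqnorm mulr_sumr; apply: eq_bigr => i _; rewrite !mxE; ring. Qed.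

Lemma sqnorm_sum N k (P : pred 'I_N) (p : 'I_N -> 'cV[R]_k) (w : 'cV[R]_k) :
  \sum_(m | P m) sqnorm (w - p m) =
  #|P|%:R * sqnorm (w - (#|P|%:R)^-1 *: \sum_(m | P m) p m)
  + (\sum_(m | P m) sqnorm (p m) - (#|P|%:R)^-1 * sqnorm (\sum_(m | P m) p m)).
Proof.
have [P0c|M0] := eqVneq (#|P|) 0%N.
  have P0 := card0_eq P0c.
  rewrite !big_pred0 // P0c mul0r add0r /sqnorm big1 ?mulr0 ?subrr // => i _.
  by rewrite mxE expr0n.
have M0' : (#|P|%:R : R) != 0 by rewrite pnatr_eq0.
under eq_bigr do rewrite sqnormB.
rewrite sqnormB sqnormZ dotvZr dotv_sumr !big_split /= sumrN sumr_const.
rewrite -mulr_sumr.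
field; exact: M0'.
Qed.

Lemma gaussE k (m : 'cV[R]_k) s2 x : gauss m s2 x =
  (Num.sqrt (2 * pi * s2)) ^- k * expR (- ((2 * s2)^-1 * sqnorm (x - m))).
Proof. by rewrite /gauss; congr (_ * expR _); rewrite mulNr mulrC. Qed.

Lemma gauss_ge0 k (m : 'cV[R]_k) s2 x : 0 <= gauss m s2 x.
Proof. by rewrite /gauss mulr_ge0 ?expR_ge0 // invr_ge0 exprn_ge0 // sqrtr_ge0. Qed.

Lemma expR_eq3 (a1 b1 c1 a2 b2 c2 : R) : a1 + b1 + c1 = a2 + b2 + c2 ->
  expR a1 * expR b1 * expR c1 = expR a2 * expR b2 * expR c2.
Proof. by rewrite -!expRD => ->. Qed.

Lemma expR_eq2 (a1 b1 a2 b2 : R) : a1 + b1 = a2 + b2 ->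
  expR a1 * expR b1 = expR a2 * expR b2.
Proof. by rewrite -!expRD => ->. Qed.

End Aux.

Section Part2.
Variables (R : realType) (N' b d : nat) (n : 'I_N'.+1)
  (X : 'I_N'.+1 -> 'M[R]_(b, d)) (rho sigma zeta : R) (Y : 'I_N'.+1 -> 'cV[R]_b).
Hypotheses (rho0 : 0 < rho) (sigma0 : 0 < sigma) (zeta0 : 0 < zeta)
  (XX : forall m, (X m)^T *m X m = rho%:M).

Let uh m := uhat (X m) (Y m).
Let al := (2 * sigma ^+ 2)^-1 * rho.
Let be := (2 * zeta ^+ 2)^-1.
Let ga := al * be / (al + be).
Let cs := (Num.sqrt (2 * pi * sigma ^+ 2)) ^- b.
Let cz := (Num.sqrt (2 * pi * zeta ^+ 2)) ^- d.
Let Am m := cs * expR (- ((2 * sigma ^+ 2)^-1 * (sqnorm (Y m) - rho * sqnorm (uh m)))).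
Let Sq := Num.sqrt (pi / (al + be)).
Let J m w := Am m * cz * expR (- (ga * sqnorm (uh m - w))) * Sq ^+ d.

Let al0 : 0 < al. Proof. by rewrite mulr_gt0 // invr_gt0 mulr_gt0 // exprn_gt0. Qed.
Let be0 : 0 < be. Proof. by rewrite invr_gt0 mulr_gt0 // exprn_gt0. Qed.
Let ga0 : 0 < ga. Proof. apply: divr_gt0; [apply: mulr_gt0|apply: addr_gt0]; [exact: al0|exact: be0|exact: al0|exact: be0]. Qed.
Let cs0 : 0 < cs.
Proof. by rewrite invr_gt0 exprn_gt0 // sqrtr_gt0 !mulr_gt0 ?pi_gt0 ?exprn_gt0. Qed.
Let cz0 : 0 < cz.
Proof. by rewrite invr_gt0 exprn_gt0 // sqrtr_gt0 !mulr_gt0 ?pi_gt0 ?exprn_gt0. Qed.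
Let Am0 m : 0 < Am m. Proof. by rewrite mulr_gt0 ?expR_gt0. Qed.
Let Sq0 : 0 < Sq. Proof. by rewrite sqrtr_gt0 divr_gt0 ?pi_gt0 ?addr_gt0. Qed.
Let J0 m w : 0 < J m w.
Proof. by rewrite !mulr_gt0 ?expR_gt0 ?exprn_gt0. Qed.

Lemma gaussY m (x : 'cV[R]_d) : gauss (X m *m x) (sigma ^+ 2) (Y m)
  = Am m * expR (- (al * sqnorm (x - uh m))).
Proof.
rewrite gaussE (@sqnorm_lsq _ _ _ (X m) (Y m) rho x (lt0r_neq0 rho0) (XX m)) /Am /al -/(uh m) -/cs.
rewrite -mulrA -expRD; congr (_ * expR _); ring.
Qed.

Lemma gaussZ (w x : 'cV[R]_d) : gauss w (zeta ^+ 2) x = cz * expR (- (be * sqnorm (x - w))).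
Proof. by rewrite gaussE. Qed.

Lemma phiE m (w x : 'cV[R]_d) : gauss (X m *m x) (sigma ^+ 2) (Y m) * gauss w (zeta ^+ 2) x
  = (Am m * cz * expR (- (ga * sqnorm (uh m - w))))
    * expR (- ((al + be) * sqnorm (x - (al + be)^-1 *: (al *: uh m + be *: w)))).
Proof.
rewrite gaussY gaussZ.
have E := @sqnorm_comb R d al be x (uh m) w (lt0r_neq0 (addr_gt0 al0 be0)).
transitivity (Am m * cz * (expR (- (al * sqnorm (x - uh m))) * expR (- (be * sqnorm (x - w))))).
  by ring.
rewrite (@expR_eq2 R _ _ (- (ga * sqnorm (uh m - w)))
   (- ((al + be) * sqnorm (x - (al + be)^-1 *: (al *: uh m + be *: w))))).
  by ring.
by rewrite /ga; lra.
Qed.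

Lemma Jint m (w : 'cV[R]_d) c : 0 <= c ->
  intV (fun x => (c * (gauss (X m *m x) (sigma ^+ 2) (Y m) * gauss w (zeta ^+ 2) x))%:E)
  = (c * J m w)%:E.
Proof.
move=> c0.
rewrite (_ : (fun x => _) = (fun x =>
   ((c * (Am m * cz * expR (- (ga * sqnorm (uh m - w)))))
    * expR (- ((al + be) * sqnorm (x - (al + be)^-1 *: (al *: uh m + be *: w)))))%:E)).
  rewrite intV_gauss ?addr_gt0 //; last by rewrite mulr_ge0 // ltW // !mulr_gt0 ?expR_gt0.
  by rewrite /J -/Sq; congr EFin; ring.
by apply/funext => x; rewrite phiE mulrA.
Qed.

Let M : R := N'%:R.
Let S := \sum_(m | m != n) uh m.
Let q := M^-1 *: S.
Let Q := \sum_(m | m != n) sqnorm (uh m) - M^-1 * sqnorm S.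
Let Pc := \prod_(m | m != n) (Am m * cz * Sq ^+ d).
Let ga' := ga * M.
Let dl := be * ga' / (be + ga').
Let Sq2 := Num.sqrt (pi / (be + ga')).
Let B u := Am n * cz * expR (- (al * sqnorm (u - uh n))) * Pc * expR (- (ga * Q))
           * expR (- (dl * sqnorm (u - q))).

Lemma post_step1 (u : 'cV[R]_d) : post_unnorm X Y sigma zeta n u =
  intV (fun w => (gauss (X n *m u) (sigma ^+ 2) (Y n) * gauss w (zeta ^+ 2) u
                  * \prod_(m | m != n) J m w)%:E).
Proof.
rewrite /post_unnorm; congr intV; apply/funext => w.
rewrite (@intFam_prod R _ d _ (fun m x => gauss (X m *m x) (sigma ^+ 2) (Y m) * gauss w (zeta ^+ 2) x) (fun m => J m w)).
- congr EFin; congr (_ * _).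
  + rewrite (eq_bigl (pred1 n)) ?big_pred1_eq // => j /=.
    by rewrite mem_filter mem_enum andbT negbK.
  + by rewrite big_filter big_enum_cond /=.
- by rewrite filter_uniq // enum_uniq.
- by move=> m x; rewrite mulr_ge0 // gauss_ge0.
- by move=> m; exact/ltW/J0.
- by move=> m c _ c0; exact: Jint.
Qed.

Let M0 : 0 <= M. Proof. exact: ler0n. Qed.
Let ga'0 : 0 <= ga'. Proof. by rewrite mulr_ge0 // ltW. Qed.
Let bg0 : 0 < be + ga'. Proof. by rewrite ltr_wpDr. Qed.

Lemma post_step2 (u w : 'cV[R]_d) :
  gauss (X n *m u) (sigma ^+ 2) (Y n) * gauss w (zeta ^+ 2) u
  * \prod_(m | m != n) J m w
  = B u * expR (- ((be + ga') * sqnorm (w - (be + ga')^-1 *: (be *: u + ga' *: q)))).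
Proof.
rewrite gaussY gaussZ.
have P1 : \prod_(m | m != n) J m w
          = Pc * expR (- (ga * \sum_(m | m != n) sqnorm (uh m - w))).
  rewrite mulr_sumr -sumrN expR_sum /Pc -big_split /=.
  by apply: eq_bigr => m _; rewrite /J; ring.
have S1 : \sum_(m | m != n) sqnorm (uh m - w) = M * sqnorm (w - q) + Q.
  rewrite (eq_bigr (fun m => sqnorm (w - uh m))) => [|m _]; last exact: sqnormB_sym.
  have := @sqnorm_sum R _ d (predC1 n) uh w.
  by rewrite cardC1 card_ord /=.
have E := @sqnorm_comb R d be ga' w u q (lt0r_neq0 bg0).
rewrite P1 S1 (@sqnormB_sym R d u w).
transitivity (Am n * expR (- (al * sqnorm (u - uh n))) * cz * Pc *
   (expR (- (be * sqnorm (w - u))) * expR (- (ga * (M * sqnorm (w - q) + Q)))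
    * expR 0)).
  by rewrite expR0; ring.
rewrite (@expR_eq3 R _ _ _ (- (ga * Q)) (- (dl * sqnorm (u - q)))
   (- ((be + ga') * sqnorm (w - (be + ga')^-1 *: (be *: u + ga' *: q))))).
  by rewrite /B; ring.
have -> : ga * (M * sqnorm (w - q) + Q) = ga' * sqnorm (w - q) + ga * Q.
  by rewrite /ga'; ring.
rewrite /dl; lra.
Qed.

Let B0 u : 0 < B u.
Proof.
have Pc0 : 0 < Pc.
  rewrite /Pc; apply: prodr_gt0 => m _; apply: mulr_gt0; [apply: mulr_gt0; [exact: Am0|exact: cz0]|exact: exprn_gt0 Sq0].
by rewrite /B !mulr_gt0 ?expR_gt0.
Qed.

Lemma post_step3 (u : 'cV[R]_d) :
  post_unnorm X Y sigma zeta n u = (B u * Sq2 ^+ d)%:E.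
Proof.
rewrite post_step1.
rewrite (_ : (fun w => _) = (fun w => (B u * expR (- ((be + ga') *
      sqnorm (w - (be + ga')^-1 *: (be *: u + ga' *: q)))))%:E)).
  by rewrite intV_gauss // ltW.
by apply/funext => w; rewrite post_step2.
Qed.

Lemma part2 :
  let sw2 := ((N'.+1%:R - 1) / (sigma ^+ 2 / rho + N'.+1%:R * zeta ^+ 2)
               + rho / sigma ^+ 2)^-1 in
  exists C : R, 0 < C /\
    forall u : 'cV[R]_d,
      post_unnorm X Y sigma zeta n u =
      (C * gauss ((sw2 * rho / sigma ^+ 2) *: uhat (X n) (Y n)
                  + (sw2 * rho / (sigma ^+ 2 + N'.+1%:R * zeta ^+ 2 * rho)) *:
                      (\sum_(m < N'.+1 | m != n) uhat (X m) (Y m)))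
                 sw2 u)%:E.
Proof.
move=> sw2.
have s0 : 0 < sigma ^+ 2 by rewrite exprn_gt0.
have z0 : 0 < zeta ^+ 2 by rewrite exprn_gt0.
have [e1 e2 e3] := @scal R rho (sigma ^+ 2) (zeta ^+ 2) M rho0 s0 z0 M0.
have sw2E : sw2 = ((M + 1 - 1) / (sigma ^+ 2 / rho + (M + 1) * zeta ^+ 2)
               + rho / sigma ^+ 2)^-1 by rewrite /sw2 /M natr1.
have E1 : al + dl = (2 * sw2)^-1 by rewrite sw2E; exact: e1.
have E2 : (al + dl)^-1 * al = sw2 * rho / sigma ^+ 2 by rewrite sw2E; exact: e2.
have E3 : (al + dl)^-1 * (be * ga / (be + ga'))
          = sw2 * rho / (sigma ^+ 2 + N'.+1%:R * zeta ^+ 2 * rho).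
  by rewrite sw2E -natr1; exact: e3.
have dl0 : 0 <= dl by apply: divr_ge0; [apply: mulr_ge0; [exact: ltW be0|exact: ga'0]|exact: ltW bg0].
have ad0 : 0 < al + dl by rewrite ltr_wpDr.
have sw0 : 0 < sw2.
  by move: ad0; rewrite E1 invr_gt0 pmulr_rgt0.
set mu' := (al + dl)^-1 *: (al *: uh n + dl *: q).
have dlq : dl *: q = (be * ga / (be + ga')) *: S.
  have [M00|Mn0] := eqVneq M 0.
    have S0 : S = 0.
      rewrite /S big_pred0 // => m; apply/negbTE; rewrite negbK.
      move/eqP: M00; rewrite /M pnatr_eq0 => /eqP N0.
      have hn : (n < 1)%N by apply: leq_trans (ltn_ord n) _; rewrite N0.
      have hm : (m < 1)%N by apply: leq_trans (ltn_ord m) _; rewrite N0.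
      move: hn hm; rewrite !ltnS !leqn0 => /eqP hn /eqP hm.
      by apply/eqP/ord_inj; rewrite hn hm.
    by rewrite /q S0 !scaler0.
  rewrite /q scalerA; congr (_ *: _); rewrite /dl /ga'; field.
  by rewrite Mn0 /= lt0r_neq0 // ltr_wpDr // ltW.
have muE : mu' = (sw2 * rho / sigma ^+ 2) *: uhat (X n) (Y n)
          + (sw2 * rho / (sigma ^+ 2 + N'.+1%:R * zeta ^+ 2 * rho)) *:
              (\sum_(m < N'.+1 | m != n) uhat (X m) (Y m)).
  by rewrite /mu' dlq scalerDr !scalerA E2 E3.
pose K0 := Am n * cz * Pc * expR (- (ga * Q)) * Sq2 ^+ d
           * expR (- (al * dl / (al + dl) * sqnorm (uh n - q))).
pose cw := (Num.sqrt (2 * pi * sw2)) ^- d.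
have cw0 : 0 < cw.
  by rewrite invr_gt0 exprn_gt0 // sqrtr_gt0 !mulr_gt0 ?pi_gt0.
have Pc0 : 0 < Pc.
  rewrite /Pc; apply: prodr_gt0 => m _; apply: mulr_gt0;
    [apply: mulr_gt0; [exact: Am0|exact: cz0]|exact: exprn_gt0 Sq0].
have Sq20 : 0 < Sq2 by rewrite sqrtr_gt0 divr_gt0 ?pi_gt0.
have K00 : 0 < K0.
  rewrite /K0; apply: mulr_gt0; last exact: expR_gt0.
  apply: mulr_gt0; last exact: exprn_gt0.
  apply: mulr_gt0; last exact: expR_gt0.
  apply: mulr_gt0; last exact: Pc0.
  apply: mulr_gt0; [exact: Am0|exact: cz0].
exists (K0 / cw); split; first by rewrite divr_gt0.
move=> u; rewrite post_step3 gaussE -muE -/cw; congr EFin.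
rewrite -E1.
have V := @sqnorm_comb R d al dl u (uh n) q (lt0r_neq0 ad0).
transitivity (Am n * cz * Pc * expR (- (ga * Q)) * Sq2 ^+ d *
   (expR (- (al * sqnorm (u - uh n))) * expR (- (dl * sqnorm (u - q))))).
  by rewrite /B; ring.
rewrite (@expR_eq2 R _ _ (- ((al + dl) * sqnorm (u - mu')))
           (- (al * dl / (al + dl) * sqnorm (uh n - q)))); last by lra.
rewrite /K0; field; exact: lt0r_neq0.
Qed.

End Part2.

Section Part1.
Variables (R : realType) (N b d : nat) (n : 'I_N) (X : 'I_N -> 'M[R]_(b, d))
  (rho lambda : R) (Y : 'I_N -> 'cV[R]_b) (z : 'I_N -> 'cV[R]_d).
Hypotheses (rho0 : 0 < rho) (l0 : 0 <= lambda) (l2 : lambda <= 2)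
  (XX : forall m, (X m)^T *m X m = rho%:M).

Lemma XstackE : (Xstack X)^T *m Xstack X = (N%:R * rho)%:M.
Proof.
rewrite /Xstack tr_mxcol mul_mxrow_mxcol.
under eq_bigr do rewrite XX.
apply/matrixP => i j; rewrite summxE !mxE sumr_const card_ord.
by case: (i == j); rewrite /= ?mulr1n ?mulr0n ?mul0rn // mulr_natl.
Qed.

Lemma omegaE : (0 < N)%N ->
  omega_tilde X Y z = (N%:R)^-1 *: \sum_m (uhat (X m) (Y m) + z m).
Proof.
move=> N0; rewrite /omega_tilde XstackE invmx_scalar scaler_sumr.
apply: eq_bigr => m _; rewrite XX -mulmxA mul_scalar_mx mul_scalar_mx scalerA.
congr (_ *: _); field; by rewrite pnatr_eq0 -lt0n N0 lt0r_neq0.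
Qed.

Lemma part1 :
  is_unique_argmin (pers_obj X Y z n lambda)
    ((b%:R / ((2 - lambda) * rho + b%:R * lambda)) *:
       (((2 - lambda) * rho / b%:R + lambda / N%:R) *: uhat (X n) (Y n)
        + (lambda / N%:R) *: (\sum_(m < N | m != n) uhat (X m) (Y m))
        + (lambda / N%:R) *: (\sum_(m < N) z m))).
Proof.
have N0 : (0 < N)%N by apply: leq_ltn_trans (leq0n n) (ltn_ord n).
have [d0|dpos] := posnP d.
  have alleq (v w : 'cV[R]_d) : v = w.
    by apply/matrixP => i j; exfalso; case: i => k hk; move: hk; rewrite d0.
  have fc v : pers_obj X Y z n lambda v = pers_obj X Y z n lambda 0 by rewrite (alleq v 0).
  split; first by move=> y; rewrite fc (fc y).
  by move=> y _; exact: alleq.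
have bpos : (0 < b)%N.
  rewrite lt0n; apply/negP => /eqP b0.
  have := XX n; move/matrixP => /(_ (Ordinal dpos) (Ordinal dpos)).
  rewrite !mxE eqxx mulr1n big1 => [/esym/eqP|k _]; first by rewrite gt_eqF.
  by exfalso; case: k => k hk; move: hk; rewrite b0.
have bR : 0 < (b%:R : R) by rewrite ltr0n.
have NR : 0 < (N%:R : R) by rewrite ltr0n.
set uh := uhat (X n) (Y n).
set wt := omega_tilde X Y z.
pose Aa := (1 - lambda / 2) * (b%:R)^-1 * rho.
pose Bb := lambda / 2.
pose Kc := (1 - lambda / 2) * (b%:R)^-1 * (sqnorm (Y n) - rho * sqnorm uh).
have t0 : 0 < (b%:R)^-1 * rho by rewrite mulr_gt0 // invr_gt0.
have AB0 : 0 < Aa + Bb.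
  rewrite /Aa /Bb -mulrA; move: ((b%:R)^-1 * rho) t0 => t tt0.
  have [lt2|ge2] := ltP lambda 2.
    have : 0 < (1 - lambda / 2) * t by rewrite mulr_gt0 //; lra.
    by move=> ?; rewrite ltr_wpDr // divr_ge0.
  have e : lambda = 2 by apply/eqP; rewrite eq_le l2 ge2.
  by rewrite e divff ?subrr ?mul0r ?add0r.
pose r := (Aa + Bb)^-1 *: (Aa *: uh + Bb *: wt).
have fE w : pers_obj X Y z n lambda w
    = (Aa + Bb) * sqnorm (w - r) + (Aa * Bb / (Aa + Bb) * sqnorm (uh - wt) + Kc).
  have V := @sqnorm_comb R d Aa Bb w uh wt (lt0r_neq0 AB0).
  rewrite /pers_obj /Floss -/wt (@sqnormB_sym R b (X n *m w) (Y n)).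
  rewrite (@sqnorm_lsq R b d (X n) (Y n) rho w (lt0r_neq0 rho0) (XX n)) -/uh.
  transitivity (Aa * sqnorm (w - uh) + Bb * sqnorm (w - wt) + Kc).
    by rewrite /Aa /Bb /Kc; ring.
  by rewrite V /r; ring.
have sq0 : sqnorm (0 : 'cV[R]_d) = 0.
  by rewrite /sqnorm big1 // => i _; rewrite mxE expr0n.
have -> : (b%:R / ((2 - lambda) * rho + b%:R * lambda)) *:
       (((2 - lambda) * rho / b%:R + lambda / N%:R) *: uh
        + (lambda / N%:R) *: (\sum_(m < N | m != n) uhat (X m) (Y m))
        + (lambda / N%:R) *: (\sum_(m < N) z m)) = r.
  have D0 : 0 < (2 - lambda) * rho + b%:R * lambda.
    have [l00|lpos] := eqVneq lambda 0.
      by rewrite l00 subr0 mulr0 addr0 mulr_gt0.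
    rewrite ltr_wpDl ?mulr_ge0 ?subr_ge0 ?(ltW rho0) // mulr_gt0 //.
    by rewrite lt0r lpos l0.
  have keyE (U S Z : 'cV[R]_d) :
    (b%:R / ((2 - lambda) * rho + b%:R * lambda)) *:
       (((2 - lambda) * rho / b%:R + lambda / N%:R) *: U
        + (lambda / N%:R) *: S + (lambda / N%:R) *: Z)
    = (Aa + Bb)^-1 *: (Aa *: U + Bb *: ((N%:R)^-1 *: (U + S + Z))).
    apply/matrixP => i j; rewrite !mxE.
    move: AB0; rewrite /Aa /Bb => AB0.
    by field; rewrite !gt_eqF // (mulrC lambda).
  rewrite /r /wt omegaE // big_split /= [\sum_(m < N) uhat _ _](bigD1 n) //= -/uh.
split.
  by move=> y; rewrite !fE subrr sq0 mulr0 add0r lerDr mulr_ge0 ?sqnorm_ge0 // ltW.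
move=> y /(_ r); rewrite !fE subrr sq0 mulr0 add0r gerDr.
rewrite pmulr_rle0 // => H.
have : sqnorm (y - r) = 0 by apply/eqP; rewrite eq_le H sqnorm_ge0.
by move/sqnorm_eq0/eqP; rewrite subr_eq0 => /eqP.
Qed.

End Part1.

Theorem lemma3 (R : realType) (N b d : nat) (n : 'I_N)
    (X : 'I_N -> 'M[R]_(b, d)) (rho sigma zeta lambda : R) :
  0 < rho -> 0 < sigma -> 0 < zeta -> 0 <= lambda <= 2 ->
  (forall m, (X m)^T *m X m = rho%:M) ->
  (* (1) closed form of the DP-perturbed optimal personalised model *)
  (forall (Y : 'I_N -> 'cV[R]_b) (z : 'I_N -> 'cV[R]_d),
     is_unique_argmin (pers_obj X Y z n lambda)
       ((b%:R / ((2 - lambda) * rho + b%:R * lambda)) *: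
          (((2 - lambda) * rho / b%:R + lambda / N%:R) *: uhat (X n) (Y n)
           + (lambda / N%:R) *: (\sum_(m < N | m != n) uhat (X m) (Y m))
           + (lambda / N%:R) *: (\sum_(m < N) z m)))) /\
  (* (2) posterior of the optimal local model u_n^* given the data *)
  (let sw2 := ((N%:R - 1) / (sigma ^+ 2 / rho + N%:R * zeta ^+ 2)
               + rho / sigma ^+ 2)^-1 in
   forall Y : 'I_N -> 'cV[R]_b,
     exists C : R, 0 < C /\
       forall u : 'cV[R]_d,
         post_unnorm X Y sigma zeta n u =
         (C * gauss ((sw2 * rho / sigma ^+ 2) *: uhat (X n) (Y n)
                     + (sw2 * rho / (sigma ^+ 2 + N%:R * zeta ^+ 2 * rho)) *:
                         (\sum_(m < N | m != n) uhat (X m) (Y m)))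
                    sw2 u)%:E).

Proof.
move=> rho0 sigma0 zeta0 /andP[l0 l2] XX; split.
  by move=> Y z; exact: part1.
case: N n X XX => [|N'] n X XX; first by case: n.
move=> sw2 Y.
by apply: part2.
Qed.
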